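(* Let $(G,\preceq)$ be a cc sponge group with positive cone $C=\{x\in G\mid\mathbf{1}\preceq x\}$, and let $H$ be a subgroup of $G$ such that (i) for all $q,r\in G$, if $\mathbf{1}\preceq q$, $\mathbf{1}\preceq r$ and $q\cdot r\in H$, then $q\in H$ and $r\in H$; and (ii) for every $z\in G$ there is $h\in H$ with $R(z)\cap C\cdot H\subseteq R(h)$, where $R(z)=\{y\in G\mid z\preceq y\}$. Define the relation $\sqsubseteq$ on $G/H=\{x\cdot H\mid x\in G\}$ by $\overline{x}\sqsubseteq\overline{y}\iff x^{-1}\cdot y\in C\cdot H$ (where $\overline{x}=x\cdot H$). Then $(G/H,\sqsubseteq)$ is a cc sponge. If $H$ is a normal subgroup of $G$, then $(G/H,\sqsubseteq)$ is a cc sponge group.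
   Context: An orientation is a reflexive, antisymmetric binary relation. An oriented group is a group $G$ (operation $\cdot$, neutral element $\mathbf{1}$) with an orientation $\preceq$ such that $x\preceq y$ implies $x\cdot z\preceq y\cdot z$ and $z\cdot x\preceq z\cdot y$. A subset $P$ is right-bounded if some $s$ has $p\preceq s$ for all $p\in P$; the join of $P$ is an $x$ with $p\preceq x$ for all $p\in P$ and $x\preceq y$ whenever $p\preceq y$ for all $p\in P$. An oriented set is a cc sponge if every nonempty right-bounded subset has a join (equivalently for these structures, every nonempty left-bounded subset has a meet). A cc sponge group is an oriented group that is a cc sponge. *)

(* Defs.v *)
Section Defs.
Context {G : Type}.

Definition is_group (mul : G -> G -> G) (e : G) (inv : G -> G) : Prop :=
  (forall x y z, mul x (mul y z) = mul (mul x y) z) /\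
  (forall x, mul e x = x) /\ (forall x, mul x e = x) /\
  (forall x, mul (inv x) x = e) /\ (forall x, mul x (inv x) = e).

Definition orientation {T : Type} (le : T -> T -> Prop) : Prop :=
  (forall x, le x x) /\ (forall x y, le x y -> le y x -> x = y).

Definition right_bounded {T : Type} (le : T -> T -> Prop) (P : T -> Prop) : Prop :=
  exists s, forall p, P p -> le p s.

Definition is_join {T : Type} (le : T -> T -> Prop) (P : T -> Prop) (x : T) : Prop :=
  (forall p, P p -> le p x) /\
  (forall y, (forall p, P p -> le p y) -> le x y).

Definition cc_sponge {T : Type} (le : T -> T -> Prop) : Prop :=
  orientation le /\
  forall P : T -> Prop, (exists p, P p) -> right_bounded le P ->
    exists x, is_join le P x.

Definition oriented_group (mul : G -> G -> G) (e : G) (inv : G -> G)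
  (le : G -> G -> Prop) : Prop :=
  is_group mul e inv /\ orientation le /\
  (forall x y z, le x y -> le (mul x z) (mul y z) /\ le (mul z x) (mul z y)).

Definition cc_sponge_group (mul : G -> G -> G) (e : G) (inv : G -> G)
  (le : G -> G -> Prop) : Prop :=
  oriented_group mul e inv le /\ cc_sponge le.

Definition is_subgroup (mul : G -> G -> G) (e : G) (inv : G -> G) (H : G -> Prop) : Prop :=
  H e /\ (forall x y, H x -> H y -> H (mul x y)) /\ (forall x, H x -> H (inv x)).

Definition is_normal (mul : G -> G -> G) (inv : G -> G) (H : G -> Prop) : Prop :=
  forall g h, H h -> H (mul (mul g h) (inv g)).

Definition pcone (e : G) (le : G -> G -> Prop) (x : G) : Prop := le e x.

Definition coneH (mul : G -> G -> G) (e : G) (le : G -> G -> Prop) (H : G -> Prop) (z : G) : Prop :=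
  exists c h, pcone e le c /\ H h /\ z = mul c h.

Definition Rset (le : G -> G -> Prop) (z : G) (y : G) : Prop := le z y.

Definition coset (mul : G -> G -> G) (H : G -> Prop) (x : G) : G -> Prop :=
  fun g => exists h, H h /\ g = mul x h.

Definition quot (mul : G -> G -> G) (H : G -> Prop) : Type :=
  { S : G -> Prop | exists x, S = coset mul H x }.

Definition cls (mul : G -> G -> G) (H : G -> Prop) (x : G) : quot mul H :=
  exist _ (coset mul H x) (ex_intro _ x eq_refl).

Definition qle (mul : G -> G -> G) (e : G) (inv : G -> G) (le : G -> G -> Prop)
  (H : G -> Prop) (S T : quot mul H) : Prop :=
  exists x y, proj1_sig S = coset mul H x /\ proj1_sig T = coset mul H y /\
    coneH mul e le H (mul (inv x) y).

End Defs.

(* Main.v *)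
Require Import Defs.
From Stdlib Require Import FunctionalExtensionality PropExtensionality ProofIrrelevance.

Theorem mainTheorem12 (G : Type) (mul : G -> G -> G) (e : G) (inv : G -> G)
  (le : G -> G -> Prop) (H : G -> Prop)
  (hG : cc_sponge_group mul e inv le)
  (hH : is_subgroup mul e inv H)
  (hi : forall q r, pcone e le q -> pcone e le r -> H (mul q r) -> H q /\ H r)
  (hii : forall z, exists h, H h /\
     forall y, Rset le z y -> coneH mul e le H y -> Rset le h y) :
  cc_sponge (qle mul e inv le H) /\
  (is_normal mul inv H ->
     (* G/H with coset multiplication xbar.ybar = (xy)bar is an oriented group,
        i.e. [= is compatible with the multiplication on both sides *)
     forall x y z, qle mul e inv le H (cls mul H x) (cls mul H y) ->
       qle mul e inv le H (cls mul H (mul x z)) (cls mul H (mul y z)) /\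
       qle mul e inv le H (cls mul H (mul z x)) (cls mul H (mul z y))).
Proof.
destruct hG as [[[assoc [idl [idr [invl invr]]]] [[lrefl lanti] comp]] [_ hjoin]].
destruct hH as [He [Hmul Hinv]].
assert (cancl : forall x y, mul (inv x) (mul x y) = y).
{ intros. rewrite assoc, invl, idl. reflexivity. }
assert (cancr : forall x y, mul x (mul (inv x) y) = y).
{ intros. rewrite assoc, invr, idl. reflexivity. }
assert (uniqr : forall a b, mul a b = e -> b = inv a).
{ intros a b Hab. rewrite <- (cancl a b), Hab, idr. reflexivity. }
assert (uniql : forall a b, mul a b = e -> a = inv b).
{ intros a b Hab. rewrite <- (idr a), <- (invr b), assoc, Hab, idl. reflexivity. }
assert (invinv : forall x, inv (inv x) = x).
{ intros. symmetry. apply uniqr. apply invl. }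
assert (invmul : forall x y, inv (mul x y) = mul (inv y) (inv x)).
{ intros. symmetry. apply uniqr. rewrite <- assoc, cancr. apply invr. }
assert (Cconj : forall c g, le e c -> le e (mul (mul g c) (inv g))).
{ intros c g Hc. destruct (comp _ _ g Hc) as [_ H1]. destruct (comp _ _ (inv g) H1) as [H2 _].
  rewrite idr, invr in H2. exact H2. }
assert (HC : forall h c, H h -> le e c -> coneH mul e le H (mul h c)).
{ intros h c Hh Hc. exists (mul (mul h c) (inv h)), h. split; [apply Cconj; auto | split; auto].
  rewrite <- !assoc, invl, idr. reflexivity. }
assert (rel_r : forall x y h, coneH mul e le H (mul (inv x) y) -> H h ->
          coneH mul e le H (mul (inv x) (mul y h))).
{ intros x y h [c [h1 [Hc [Hh1 E]]]] Hh. exists c, (mul h1 h). split; [auto|split; [auto|]].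
  rewrite assoc, E, assoc. reflexivity. }
assert (rel_l : forall x y h, coneH mul e le H (mul (inv x) y) -> H h ->
          coneH mul e le H (mul (inv (mul x h)) y)).
{ intros x y h [c [h1 [Hc [Hh1 E]]]] Hh.
  destruct (HC (inv h) c (Hinv h Hh) Hc) as [c' [h' [Hc' [Hh' E']]]].
  exists c', (mul h' h1). split;[auto|split;[auto|]].
  rewrite invmul, <- assoc, E, assoc, E', <- assoc. reflexivity. }
assert (le_rel : forall x y, le x y -> coneH mul e le H (mul (inv x) y)).
{ intros x y Hxy. exists (mul (inv x) y), e. unfold pcone.
  split; [|split; [exact He| symmetry; apply idr]].
  destruct (comp _ _ (inv x) Hxy) as [_ H1]. rewrite invl in H1. exact H1. }
assert (coset_rep : forall x y, coset mul H x = coset mul H y -> exists h, H h /\ y = mul x h).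
{ intros x y E. assert (Hy : coset mul H y y) by (exists e; split; [exact He | symmetry; apply idr]).
  rewrite <- E in Hy. exact Hy. }
assert (rel_rep : forall x y x' y', coset mul H x = coset mul H x' -> coset mul H y = coset mul H y' ->
   coneH mul e le H (mul (inv x) y) -> coneH mul e le H (mul (inv x') y')).
{ intros x y x' y' E1 E2 R. destruct (coset_rep _ _ E1) as [h [Hh ->]].
  destruct (coset_rep _ _ E2) as [h' [Hh' ->]]. apply rel_r; [apply rel_l|]; auto. }
assert (qle_rel : forall S T x y, qle mul e inv le H S T -> proj1_sig S = coset mul H x ->
   proj1_sig T = coset mul H y -> coneH mul e le H (mul (inv x) y)).
{ intros S T x y [a [b [Ea [Eb R]]]] Ex Ey. apply (rel_rep a b); congruence. }
assert (rep : forall S : quot mul H, exists x, proj1_sig S = coset mul H x).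
{ intros S. exact (proj2_sig S). }
assert (shift : forall p t, coneH mul e le H (mul (inv p) t) -> exists u, le p u /\
   (forall x, coneH mul e le H (mul (inv x) t) -> coneH mul e le H (mul (inv x) u)) /\
   (forall y, coneH mul e le H (mul (inv y) u) -> coneH mul e le H (mul (inv y) t))).
{ intros p t [c [h [Hc [Hh E]]]]. exists (mul t (inv h)). split; [|split].
  - destruct (comp _ _ p Hc) as [_ H1]. rewrite idr in H1.
    replace (mul t (inv h)) with (mul p c); [exact H1|].
    rewrite <- (cancr p t), E, <- !assoc, invr, idr. reflexivity.
  - intros x Hx. apply rel_r; auto.
  - intros y Hy. replace t with (mul (mul t (inv h)) h) by (rewrite <- assoc, invl, idr; reflexivity).
    apply rel_r; auto. }
split.
- split.
  + split.
    * intros S. destruct (rep S) as [x Ex]. exists x, x. split; [exact Ex|split;[exact Ex|]].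
      exists e, e. unfold pcone. split;[apply lrefl|split;[exact He|]].
      rewrite invl, idl. reflexivity.
    * intros S T HST HTS. destruct (rep S) as [x Ex]; destruct (rep T) as [y Ey].
      pose proof (qle_rel _ _ _ _ HST Ex Ey) as [c1 [h1 [Hc1 [Hh1 E1]]]].
      pose proof (qle_rel _ _ _ _ HTS Ey Ex) as [c2 [h2 [Hc2 [Hh2 E2]]]].
      destruct (HC h1 c2 Hh1 Hc2) as [c' [h' [Hc' [Hh' E']]]].
      assert (Eprod : mul (mul c1 c') (mul h' h2) = e).
      { transitivity (mul (mul (inv x) y) (mul (inv y) x)).
        - rewrite E1, E2. rewrite <- !assoc. rewrite (assoc h1 c2 h2), E', <- assoc. reflexivity.
        - rewrite <- assoc, cancr, invl. reflexivity. }
      assert (Hcc : H (mul c1 c')) by (rewrite (uniql _ _ Eprod); apply Hinv, Hmul; auto).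
      destruct (hi c1 c' Hc1 Hc' Hcc) as [Hc1H _].
      assert (Hk : H (mul (inv x) y)) by (rewrite E1; apply Hmul; auto).
      assert (Ecos : coset mul H x = coset mul H y).
      { apply functional_extensionality; intro g; apply propositional_extensionality.
        split; intros [h [Hh Eg]].
        - exists (mul (inv (mul (inv x) y)) h). split; [apply Hmul; auto|].
          rewrite Eg, invmul, invinv, <- assoc, cancr. reflexivity.
        - exists (mul (mul (inv x) y) h). split; [apply Hmul; auto|].
          rewrite Eg, <- assoc, cancr. reflexivity. }
      destruct S as [S pS], T as [T pT]. simpl in Ex, Ey. subst S T.
      apply subset_eq_compat. exact Ecos.
  + intros P [P0 HP0] [S0 HS0].
    destruct (rep P0) as [p0 Ep0]. destruct (rep S0) as [s Es].
    destruct (shift p0 s (qle_rel _ _ _ _ (HS0 P0 HP0) Ep0 Es)) as [u0 [Hu0 [Hu0a _]]].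
    set (U := fun u => (forall p, P p -> qle mul e inv le H p (cls mul H u)) /\ le p0 u).
    set (L := fun l => forall u, U u -> le l u).
    destruct (hjoin L) as [m [Jub Jleast]].
    { exists p0. intros u [_ Hu]. exact Hu. }
    { exists u0. intros l Hl. apply Hl. split; [|exact Hu0]. intros p Pp.
      destruct (rep p) as [x Ex]. exists x, u0. split;[exact Ex|split;[reflexivity|]].
      apply Hu0a. apply (qle_rel _ _ _ _ (HS0 p Pp) Ex Es). }
    exists (cls mul H m). split.
    * intros p Pp. destruct (rep p) as [x Ex]. destruct (hii (mul (inv x) p0)) as [h [Hh Hh']].
      assert (HL : L (mul x h)).
      { intros u [ubu lepu].
        pose proof (qle_rel p (cls mul H u) x u (ubu p Pp) Ex eq_refl) as Rxu.
        assert (K0 : le h (mul (inv x) u)).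
        { apply Hh'.
          - unfold Rset. destruct (comp _ _ (inv x) lepu) as [_ K]; exact K.
          - exact Rxu. }
        destruct (comp _ _ x K0) as [_ K]. rewrite cancr in K. exact K. }
      pose proof (le_rel _ _ (Jub _ HL)) as R1.
      exists x, m. split;[exact Ex|split;[reflexivity|]].
      assert (Ex' : mul (mul x h) (inv h) = x) by (rewrite <- assoc, invr, idr; reflexivity).
      rewrite <- Ex'. apply rel_l; auto.
    * intros T HT. destruct (rep T) as [t Et].
      destruct (shift p0 t (qle_rel _ _ _ _ (HT P0 HP0) Ep0 Et)) as [u [Hu [Hua Hub]]].
      assert (Uu : U u).
      { split;[|exact Hu]. intros p Pp. destruct (rep p) as [x Ex].
        exists x, u. split;[exact Ex|split;[reflexivity|]].
        apply Hua. apply (qle_rel _ _ _ _ (HT p Pp) Ex Et). }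
      assert (lemu : le m u) by (apply Jleast; intros l Hl; apply Hl; exact Uu).
      exists m, t. split;[reflexivity|split;[exact Et|]]. apply Hub. apply le_rel. exact lemu.
- intros Hnorm x y z Hxy.
  pose proof (qle_rel (cls mul H x) (cls mul H y) x y Hxy eq_refl eq_refl) as [c [h [Hc [Hh E]]]].
  split.
  + exists (mul x z), (mul y z). split;[reflexivity|split;[reflexivity|]].
    exists (mul (mul (inv z) c) (inv (inv z))), (mul (mul (inv z) h) (inv (inv z))).
    split;[apply Cconj; exact Hc|split;[apply Hnorm; exact Hh|]].
    rewrite !invinv, invmul. rewrite <- !assoc. rewrite cancr.
    rewrite (assoc (inv x) y z), E, <- assoc. reflexivity.
  + exists (mul z x), (mul z y). split;[reflexivity|split;[reflexivity|]].
    exists c, h. split;[exact Hc|split;[exact Hh|]].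
    rewrite invmul, <- assoc, cancl. exact E.
Qed.
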